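(* Let $V=\{0,\alpha,\beta\}$ be the three-element ordered set with least element $0$ and two incomparable maximal elements $\alpha,\beta$. There is no algebra $A$ such that the ordered set $(\mathrm{Princ}(A),\subseteq)$ is isomorphic to $V$.
   Context: For an algebra $A$, $\mathrm{Princ}(A)$ denotes the set of principal congruences $\mathrm{con}(a,b)$ ($a,b\in A$) of $A$, ordered by inclusion, where $\mathrm{con}(a,b)$ is the least congruence of $A$ containing $(a,b)$. *)

(* Defs.v *)
From Stdlib Require Import Fin.

Record algebra := Algebra {
  carrier :> Type;
  op_sym : Type;
  arity : op_sym -> nat;
  interp : forall f : op_sym, (Fin.t (arity f) -> carrier) -> carrier
}.

Definition relation (A : algebra) := carrier A -> carrier A -> Prop.

Definition is_congruence (A : algebra) (R : relation A) : Prop :=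
  (forall x, R x x) /\
  (forall x y, R x y -> R y x) /\
  (forall x y z, R x y -> R y z -> R x z) /\
  (forall (f : op_sym A) (xs ys : Fin.t (arity A f) -> carrier A),
      (forall i, R (xs i) (ys i)) -> R (interp A f xs) (interp A f ys)).

Definition con (A : algebra) (a b : carrier A) : relation A :=
  fun x y => forall R : relation A, is_congruence A R -> R a b -> R x y.

Definition rel_eq (A : algebra) (R S : relation A) : Prop :=
  forall x y, R x y <-> S x y.
Definition rel_sub (A : algebra) (R S : relation A) : Prop :=
  forall x y, R x y -> S x y.

Definition is_principal (A : algebra) (R : relation A) : Prop :=
  exists a b, rel_eq A R (con A a b).

Inductive V : Type := V0 | Valpha | Vbeta.
Definition V_le (v w : V) : Prop :=
  match v, w with
  | V0, _ => True
  | Valpha, Valpha => True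
  | Vbeta, Vbeta => True
  | _, _ => False
  end.

(* (Princ(A), ⊆) is order-isomorphic to V: a map phi : V -> Princ(A)
   that is surjective onto Princ(A) and an order embedding
   (injectivity follows from order reflection). *)
Definition Princ_iso_V (A : algebra) : Prop :=
  exists phi : V -> relation A,
    (forall v, is_principal A (phi v)) /\
    (forall R, is_principal A R -> exists v, rel_eq A R (phi v)) /\
    (forall v w, V_le v w <-> rel_sub A (phi v) (phi w)).

(* Main.v *)
Require Import Defs.
From Stdlib Require Import Classical.

Lemma con_sym (A : algebra) a b x y : con A a b x y -> con A a b y x.
Proof. intros H R HR Hab. pose proof HR as (_&Hs&_). apply Hs. apply H; assumption. Qed.

Lemma con_trans (A : algebra) a b x y z : con A a b x y -> con A a b y z -> con A a b x z.
Proof.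
  intros H1 H2 R HR Hab. pose proof HR as HR'. destruct HR' as (_&_&Ht&_).
  apply (Ht _ y); [apply H1|apply H2]; assumption.
Qed.

Lemma con_self (A : algebra) a b : con A a b a b.
Proof. intros R _ H; exact H. Qed.

Theorem corollary1p2 : forall A : algebra, ~ Princ_iso_V A.
Proof.
  intros A [phi [Hp [Hs Hle]]].
  set (al := phi Valpha). set (be := phi Vbeta).
  assert (Hsym : forall v x y, phi v x y -> phi v y x).
  { intros v x y H. destruct (Hp v) as (a&b&E). apply E, con_sym, E, H. }
  assert (Htr : forall v x y z, phi v x y -> phi v y z -> phi v x z).
  { intros v x y z H1 H2. destruct (Hp v) as (a&b&E). apply E.
    apply (con_trans _ _ _ _ y); apply E; assumption. }
  assert (Hcov : forall p q, al p q \/ be p q).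
  { intros p q. destruct (Hs (con A p q)) as [v Ev]. { exists p, q. intros x y; tauto. }
    assert (H : phi v p q) by exact (proj1 (Ev p q) (con_self A p q)).
    destruct v.
    - left. apply (proj1 (Hle V0 Valpha) I), H.
    - left; exact H.
    - right; exact H. }
  assert (Hab : ~ rel_sub A al be) by (intro H; apply (proj2 (Hle Valpha Vbeta)) in H; exact H).
  assert (Hba : ~ rel_sub A be al) by (intro H; apply (proj2 (Hle Vbeta Valpha)) in H; exact H).
  assert (Ex : exists u v, be u v /\ ~ al u v).
  { apply NNPP. intro N. apply Hba. intros u v H. apply NNPP. intro N2. apply N; eauto. }
  destruct Ex as (u&v&Huv&Nuv).
  assert (Tot : forall z, be u z).
  { intro z. destruct (Hcov z u) as [Hzu|Hzu].
    - destruct (Hcov z v) as [Hzv|Hzv].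
      + exfalso. apply Nuv. eapply Htr; [apply Hsym; exact Hzu|exact Hzv].
      + eapply Htr; [exact Huv|apply Hsym; exact Hzv].
    - apply Hsym; exact Hzu. }
  apply Hab. intros x y _. eapply Htr; [apply Hsym, Tot|apply Tot].
Qed.
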